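(* Let $A\in\mathbb{C}^{n\times n}$ be written in the core-EP decomposition $A=U\begin{bmatrix}T&S\\0&N\end{bmatrix}U^*$ (as described in the context) and let $m\in\mathbb{N}=\{1,2,\dots\}$. Then $$A^{\#_m}=U\begin{bmatrix}T^{-1}&T^{-(m+1)}\tilde{T}_mP_{N^m}\\0&0\end{bmatrix}U^*,\qquad \tilde{T}_m=\sum_{i=0}^{m-1}T^iSN^{m-1-i}.$$
   Context: Core-EP decomposition: every $A\in\mathbb{C}^{n\times n}$ of index $k$ can be written as $A=U\begin{bmatrix}T&S\\0&N\end{bmatrix}U^*$ with $U$ unitary, $T\in\mathbb{C}^{t\times t}$ nonsingular, $t=\mathrm{rk}(A^k)$, and $N\in\mathbb{C}^{(n-t)\times(n-t)}$ nilpotent of index $k$ (blocks of size zero allowed). Here the index $\mathrm{Ind}(A)$ is the smallest nonnegative integer $k$ with $\mathcal{R}(A^k)=\mathcal{R}(A^{k+1})$, $A^0=I$. For a matrix $B$, $B^\dagger$ is its Moore–Penrose inverse and $P_B=BB^\dagger$. The core-EP inverse $A^{\mathrm{cEP}}$ is the unique $X$ with $XAX=X$ and $\mathcal{R}(X)=\mathcal{R}(X^* )=\mathcal{R}(A^k)$. For $m\in\mathbb{N}$, the $m$-weak group inverse is $A^{\mathrm{WG}_m}:=(A^{\mathrm{cEP}})^{m+1}A^m$ and the $m$-weak core inverse is $A^{\#_m}:=A^{\mathrm{WG}_m}P_{A^m}$. *)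

(* Defs.v *)
(* Complex matrices over an arbitrary numClosedFieldType C
   (e.g. the complex numbers), with conjugation Num.conj. *)
From HB Require Import structures.
From mathcomp Require Import all_boot all_order all_algebra.
From Stdlib Require Import ClassicalEpsilon.
Set Implicit Arguments. Unset Strict Implicit. Unset Printing Implicit Defensive.
Import Order.TTheory GRing.Theory Num.Theory.
Local Open Scope ring_scope.

Section Defs.
Variable C : numClosedFieldType.

Definition ctr p q (B : 'M[C]_(p, q)) : 'M[C]_(q, p) := (map_mx Num.conj B)^T.

(* column space (range) equality R(X) = R(Y): row spaces of the transposes *)
Definition range_eq p q r (X : 'M[C]_(p, q)) (Y : 'M[C]_(p, r)) : bool :=
  (X^T == Y^T)%MS.

Definition is_index n (A : 'M[C]_n) (k : nat) : Prop :=
  range_eq (A ^+ k) (A ^+ k.+1) /\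
  forall j, (j < k)%N -> ~~ range_eq (A ^+ j) (A ^+ j.+1).

Definition nilpotent_index n (N : 'M[C]_n) (k : nat) : Prop :=
  N ^+ k = 0 /\ forall j, (j < k)%N -> N ^+ j != 0.

Definition is_MP p q (B : 'M[C]_(p, q)) (X : 'M[C]_(q, p)) : Prop :=
  [/\ B *m X *m B = B, X *m B *m X = X,
      ctr (B *m X) = B *m X & ctr (X *m B) = X *m B].

Definition MP p q (B : 'M[C]_(p, q)) : 'M[C]_(q, p) :=
  epsilon (inhabits 0) (is_MP B).

Definition Pmx p q (B : 'M[C]_(p, q)) : 'M[C]_p := B *m MP B.

Definition is_coreEP n (A : 'M[C]_n) (X : 'M[C]_n) : Prop :=
  exists k, [/\ is_index A k, X *m A *m X = X,
                range_eq X (A ^+ k) & range_eq (ctr X) (A ^+ k)].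

Definition coreEP n (A : 'M[C]_n) : 'M[C]_n :=
  epsilon (inhabits 0) (is_coreEP A).

(* m-weak group inverse and m-weak core inverse *)
Definition WGm n (A : 'M[C]_n) (m : nat) : 'M[C]_n :=
  coreEP A ^+ m.+1 *m A ^+ m.

Definition wcorem n (A : 'M[C]_n) (m : nat) : 'M[C]_n :=
  WGm A m *m Pmx (A ^+ m).

End Defs.

(* Main.v *)
Require Import Defs.
From HB Require Import structures.
From mathcomp Require Import all_boot all_order all_algebra.
From Stdlib Require Import ClassicalEpsilon.
From mathcomp Require Import zify.
Set Implicit Arguments. Unset Strict Implicit. Unset Printing Implicit Defensive.
Import Order.TTheory GRing.Theory Num.Theory.
Local Open Scope ring_scope.

Section Helpers.
Variable C : numClosedFieldType.
Implicit Types p q r : nat.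

Lemma ctr_mul p q r (A : 'M[C]_(p, q)) (B : 'M[C]_(q, r)) :
  ctr (A *m B) = ctr B *m ctr A.
Proof. by rewrite /ctr map_mxM trmx_mul. Qed.

Lemma ctrK p q (A : 'M[C]_(p, q)) : ctr (ctr A) = A.
Proof. by apply/matrixP => i j; rewrite !mxE conjCK. Qed.

Lemma ctr1 p : ctr (1%:M : 'M[C]_p) = 1%:M.
Proof. by rewrite /ctr map_mx1 trmx1. Qed.

Lemma ctr0 p q : ctr (0 : 'M[C]_(p, q)) = 0.
Proof. by apply/matrixP => i j; rewrite !mxE rmorph0. Qed.

Lemma ctr_block p1 p2 q1 q2 (a : 'M[C]_(p1, q1)) (b : 'M[C]_(p1, q2))
  (c : 'M[C]_(p2, q1)) (d : 'M[C]_(p2, q2)) :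
  ctr (block_mx a b c d) = block_mx (ctr a) (ctr c) (ctr b) (ctr d).
Proof. by rewrite /ctr map_block_mx tr_block_mx. Qed.

Lemma ctr_inv p (M : 'M[C]_p) : M \in unitmx -> ctr (invmx M) = invmx (ctr M).
Proof.
move=> Mu.
have h1 : ctr M *m ctr (invmx M) = 1%:M by rewrite -ctr_mul mulVmx // ctr1.
have [cu _] := mulmx1_unit h1.
by rewrite -[LHS]mul1mx -(mulVmx cu) -mulmxA h1 mulmx1.
Qed.

Lemma DDt0 p q (D : 'M[C]_(p, q)) : D *m ctr D = 0 -> D = 0.
Proof.
move=> h; apply/matrixP => i j; rewrite mxE.
have := congr1 (fun M : 'M[C]_p => M i i) h; rewrite !mxE.
move=> /eqP; rewrite psumr_eq0; last by move=> k _; rewrite !mxE mul_conjC_ge0.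
move=> /allP /(_ j (mem_index_enum _)); rewrite !mxE.
by rewrite mul_conjC_eq0 => /eqP.
Qed.

Lemma ctrF_unit p r (F : 'M[C]_(p, r)) (L : 'M[C]_(r, p)) :
  L *m F = 1%:M -> (ctr F *m F) \in unitmx.
Proof.
move=> hL; rewrite -row_free_unit; apply: inj_row_free => v hv.
have h0 : (v *m ctr F) *m ctr (v *m ctr F) = 0.
  by rewrite ctr_mul ctrK mulmxA -(mulmxA v) hv mul0mx.
have h1 := DDt0 h0.
have h2 : F *m ctr v = 0 by rewrite -[F]ctrK -ctr_mul h1 ctr0.
have h3 : ctr v = 0 by rewrite -[ctr v]mul1mx -hL -mulmxA h2 mulmx0.
by rewrite -[v]ctrK h3 ctr0.
Qed.

Lemma MP_frf p q r (F : 'M[C]_(p, r)) (G : 'M[C]_(r, q)) L R :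
  L *m F = 1%:M -> G *m R = 1%:M -> exists X, is_MP (F *m G) X.
Proof.
move=> hL hR.
have uF := ctrF_unit hL.
have hL' : ctr R *m ctr G = 1%:M by rewrite -ctr_mul hR ctr1.
have uG := ctrF_unit hL'; rewrite ctrK in uG.
set iF := invmx (ctr F *m F); set iG := invmx (G *m ctr G).
have eF : iF *m (ctr F *m F) = 1%:M by exact: mulVmx.
have eG : G *m ctr G *m iG = 1%:M by exact: mulmxV.
have eF' : iF *m ctr F *m F = 1%:M by rewrite -mulmxA eF.
exists (ctr G *m iG *m iF *m ctr F).
have BX : F *m G *m (ctr G *m iG *m iF *m ctr F) = F *m iF *m ctr F.
  by rewrite !mulmxA -(mulmxA F G) -(mulmxA F (G *m ctr G)) eG mulmx1.
have XB : (ctr G *m iG *m iF *m ctr F) *m (F *m G) = ctr G *m iG *m G.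
  by rewrite !mulmxA -(mulmxA _ iF (ctr F)) -(mulmxA _ (iF *m ctr F) F) eF' mulmx1.
split.
- by rewrite BX !mulmxA -(mulmxA F iF (ctr F)) -(mulmxA F (iF *m ctr F) F) eF' mulmx1.
- by rewrite XB !mulmxA -(mulmxA _ G) -(mulmxA _ (G *m ctr G)) eG mulmx1.
- by rewrite BX !ctr_mul ctrK ctr_inv // ctr_mul ctrK mulmxA.
- by rewrite XB !ctr_mul ctrK ctr_inv // ctr_mul ctrK mulmxA.
Qed.

Lemma MP_exists p q (B : 'M[C]_(p, q)) : exists X, is_MP B X.
Proof.
have [L hL] : exists L, L *m col_base B = 1%:M by apply/row_fullP; exact: col_base_full.
have [R hR] : exists R, row_base B *m R = 1%:M by apply/row_freeP; exact: row_base_free.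
by rewrite -(mulmx_base B); exact: MP_frf hL hR.
Qed.

Lemma MP_spec p q (B : 'M[C]_(p, q)) : is_MP B (MP B).
Proof. by rewrite /MP; apply: epsilon_spec; exact: MP_exists. Qed.

Lemma Pmx_char p q (B : 'M[C]_(p, q)) (Q : 'M[C]_p) Y :
  ctr Q = Q -> Q *m B = B -> Q = B *m Y -> Pmx B = Q.
Proof.
move=> hQ hQB hY; have [h1 h2 h3 h4] := MP_spec B.
rewrite /Pmx; set P := B *m MP B.
have QP : Q *m P = P by rewrite /P mulmxA hQB.
have PQ : P *m Q = Q by rewrite hY /P mulmxA h1.
by rewrite -PQ -[P *m Q]ctrK ctr_mul hQ h3 QP h3.
Qed.


Lemma range_eqP p q r (X : 'M[C]_(p, q)) (Y : 'M[C]_(p, r)) :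
  range_eq X Y <-> (exists Z, X = Y *m Z) /\ (exists W, Y = X *m W).
Proof.
rewrite /range_eq; split.
- case/andP => /submxP [D hD] /submxP [E hE]; split.
  + by exists D^T; rewrite -[X]trmxK hD trmx_mul trmxK.
  + by exists E^T; rewrite -[Y]trmxK hE trmx_mul trmxK.
- case=> [[Z hZ] [W hW]]; apply/andP; split; apply/submxP.
  + by exists Z^T; rewrite hZ trmx_mul.
  + by exists W^T; rewrite hW trmx_mul.
Qed.

Lemma index_uniq n (A : 'M[C]_n) k1 k2 : is_index A k1 -> is_index A k2 -> k1 = k2.
Proof.
move=> [h1 h1'] [h2 h2'].
case: (ltngtP k1 k2) => // hlt.
- by move: (h2' _ hlt); rewrite h1.
- by move: (h1' _ hlt); rewrite h2.
Qed.

Lemma coreEP_uniq n (A X Y : 'M[C]_n) : is_coreEP A X -> is_coreEP A Y -> X = Y.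
Proof.
move=> [k [ik hX rX rcX]] [k' [ik' hY rY rcY]].
have ekk := index_uniq ik ik'; subst k'.
move: rX rcX rY rcY => /range_eqP [_ [W1 hW1]] /range_eqP [[Z2 hZ2] _].
move=> /range_eqP [_ [W1' hW1']] /range_eqP [[Z2' hZ2'] _].
have [[V hV] _] := (range_eqP _ _).1 ik.1.
have XA : X *m A ^+ k.+1 = A ^+ k.
  by rewrite exprS -mulmxE mulmxA [in LHS]hW1 mulmxA hX -hW1.
have YA : Y *m A ^+ k.+1 = A ^+ k.
  by rewrite exprS -mulmxE mulmxA [in LHS]hW1' mulmxA hY -hW1'.
have DA : (X - Y) *m A ^+ k = 0.
  by rewrite [in LHS]hV mulmxA mulmxBl XA YA subrr mul0mx.
have eX : X = ctr Z2 *m ctr (A ^+ k) by rewrite -ctr_mul -hZ2 ctrK.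
have eY : Y = ctr Z2' *m ctr (A ^+ k) by rewrite -ctr_mul -hZ2' ctrK.
have eD : ctr (X - Y) = A ^+ k *m (Z2 - Z2').
  rewrite eX eY -mulmxBl ctr_mul ctrK; congr (_ *m _).
  by apply/matrixP => i j; rewrite !mxE rmorphB /= !conjCK.
apply/eqP; rewrite -subr_eq0; apply/eqP/DDt0.
by rewrite eD mulmxA DA mul0mx.
Qed.


Lemma conjM n (U M1 M2 : 'M[C]_n) : ctr U *m U = 1%:M ->
  U *m M1 *m ctr U *m (U *m M2 *m ctr U) = U *m (M1 *m M2) *m ctr U.
Proof.
move=> h; rewrite !mulmxA -(mulmxA (U *m M1) (ctr U) U) h mulmx1.
by rewrite -(mulmxA U M1 M2).
Qed.

Lemma conjX n (U M : 'M[C]_n) j : U *m ctr U = 1%:M -> ctr U *m U = 1%:M ->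
  (U *m M *m ctr U) ^+ j = U *m M ^+ j *m ctr U.
Proof.
move=> h1 h2; elim: j => [|j IH].
  by rewrite !expr0 -idmxE mulmx1 h1.
by rewrite !exprS -!mulmxE IH conjM.
Qed.

Lemma block_pow t s (T : 'M[C]_t) (S : 'M[C]_(t, s)) (N : 'M[C]_s) j :
  (block_mx T S 0 N) ^+ j =
  block_mx (T ^+ j) (\sum_(i < j) T ^+ i *m S *m N ^+ (j - 1 - i)) 0 (N ^+ j).
Proof.
elim: j => [|j IH].
  by rewrite !expr0 big_ord0 -!idmxE -scalar_mx_block.
have eT : T ^+ j *m T = T ^+ j.+1 by rewrite exprSr mulmxE.
have eN : N ^+ j *m N = N ^+ j.+1 by rewrite exprSr mulmxE.
rewrite exprSr -mulmxE IH mulmx_block !mulmx0 !mul0mx !addr0 add0r eT eN.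
congr block_mx.
rewrite big_ord_recr /=.
have -> : (j.+1 - 1 - j = 0)%N by lia.
rewrite expr0 -idmxE mulmx1 addrC; congr (_ + _).
rewrite mulmx_suml; apply: eq_bigr => i _.
have hi := ltn_ord i.
rewrite -mulmxA mulmxE -exprSr; congr (_ *m N ^+ _).
lia.
Qed.

Lemma powV t (T : 'M[C]_t) j : T \in unitmx ->
  T ^+ j *m invmx T ^+ j = 1%:M /\ invmx T ^+ j *m T ^+ j = 1%:M.
Proof.
move=> Tu; elim: j => [|j [IH1 IH2]].
  by rewrite !expr0 -idmxE mulmx1.
split.
- rewrite exprS exprSr -!mulmxE mulmxA -(mulmxA T) IH1 mulmx1 mulmxV //.
- rewrite exprSr exprS -!mulmxE mulmxA -(mulmxA _ (invmx T)) mulVmx // mulmx1 IH2 //.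
Qed.

End Helpers.

Theorem theorem4p6 (C : numClosedFieldType) (t s k m : nat)
  (A U : 'M[C]_(t + s)) (T : 'M[C]_t) (S : 'M[C]_(t, s)) (N : 'M[C]_s) :
  U *m ctr U = 1%:M ->
  is_index A k ->
  \rank (A ^+ k) = t ->
  T \in unitmx ->
  nilpotent_index N k ->
  A = U *m block_mx T S 0 N *m ctr U ->
  (0 < m)%N ->
  wcorem A m =
  U *m block_mx (invmx T)
                (invmx T ^+ m.+1 *m
                   (\sum_(i < m) T ^+ i *m S *m N ^+ (m - 1 - i)) *m
                   Pmx (N ^+ m))
                0 0 *m ctr U.
Proof.
move=> hU idx _ Tu [NK _] eA m0.
have hU' : ctr U *m U = 1%:M by exact: mulmx1C.
set iT := invmx T.
set Tk := \sum_(i < k) T ^+ i *m S *m N ^+ (k - 1 - i).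
set Tm := \sum_(i < m) T ^+ i *m S *m N ^+ (m - 1 - i).
have [pk1 pk2] := powV k Tu.
have [pm1 pm2] := powV m Tu.
have TiT : T *m iT = 1%:M by exact: mulmxV.
have iTT : iT *m T = 1%:M by exact: mulVmx.
have Ak : A ^+ k = U *m block_mx (T ^+ k) Tk 0 0 *m ctr U.
  by rewrite eA conjX // block_pow NK.
have Am : A ^+ m = U *m block_mx (T ^+ m) Tm 0 (N ^+ m) *m ctr U.
  by rewrite eA conjX // block_pow.
set X0 := U *m block_mx iT 0 0 0 *m ctr U.
have cX0 : is_coreEP A X0.
  exists k; split => //.
  - rewrite /X0 eA !conjM // !mulmx_block !mulmx0 !mul0mx !addr0.
    by rewrite iTT mul1mx mul0mx.
  - apply/range_eqP; split.
    + exists (U *m block_mx (invmx T ^+ k.+1) 0 0 0 *m ctr U).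
      rewrite Ak conjM // mulmx_block !mulmx0 !mul0mx !addr0.
      by rewrite exprSr -mulmxE mulmxA pk1 mul1mx.
    + exists (U *m block_mx (T ^+ k.+1) (T *m Tk) 0 0 *m ctr U).
      rewrite Ak /X0 conjM // mulmx_block !mulmx0 !mul0mx !addr0.
      by rewrite exprS -mulmxE !mulmxA iTT !mul1mx.
  - have cX : ctr X0 = U *m block_mx (ctr iT) 0 0 0 *m ctr U.
      by rewrite /X0 !ctr_mul ctrK ctr_block !ctr0 mulmxA.
    have ciT : ctr iT *m ctr T = 1%:M by rewrite -ctr_mul TiT ctr1.
    apply/range_eqP; split.
    + exists (U *m block_mx (invmx T ^+ k *m ctr iT) 0 0 0 *m ctr U).
      rewrite Ak cX conjM // mulmx_block !mulmx0 !mul0mx !addr0.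
      by rewrite mulmxA pk1 mul1mx.
    + exists (U *m block_mx (ctr T *m T ^+ k) (ctr T *m Tk) 0 0 *m ctr U).
      rewrite Ak cX conjM // mulmx_block !mulmx0 !mul0mx !addr0.
      by rewrite !mulmxA ciT !mul1mx.
have cEP : coreEP A = X0.
  exact: (coreEP_uniq (epsilon_spec (inhabits 0) (is_coreEP A) (ex_intro _ X0 cX0)) cX0).
have X0m : X0 ^+ m.+1 = U *m block_mx (iT ^+ m.+1) 0 0 0 *m ctr U.
  rewrite /X0 conjX // block_pow expr0n /=.
  by rewrite big1 // => i _; rewrite mulmx0 mul0mx.
set XN := MP (N ^+ m).
have [n1 n2 n3 n4] := MP_spec (N ^+ m).
have PA : Pmx (A ^+ m) = U *m block_mx 1%:M 0 0 (Pmx (N ^+ m)) *m ctr U.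
  apply: (@Pmx_char _ _ _ _ _
    (U *m block_mx (invmx T ^+ m) (- (invmx T ^+ m *m Tm *m XN)) 0 XN *m ctr U)).
  - by rewrite !ctr_mul ctrK ctr_block !ctr0 ctr1 /Pmx n3 mulmxA.
  - rewrite Am conjM // mulmx_block !mulmx0 !mul0mx !addr0 !add0r !mul1mx.
    by rewrite /Pmx n1.
  - rewrite Am conjM // mulmx_block !mulmx0 !mul0mx !addr0 !add0r pm1.
    by rewrite mulmxN !mulmxA pm1 mul1mx addNr.
rewrite /wcorem /WGm cEP X0m PA Am !conjM // !mulmx_block.
rewrite !mulmx0 !mul0mx !addr0 !add0r !mulmx1 mulmxA.
have e : iT ^+ m.+1 *m T ^+ m = iT.
  by rewrite exprS -mulmxE -mulmxA pm2 mulmx1.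
by rewrite e mul0mx.
Qed.
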